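(* Let $n\in\mathbb N$ and let $(M,d)$ be a pointed metric space with $d(x,y)\in\{0,1,\dots,n\}$ for all $x,y\in M$. Let $\mu\in ba(\widetilde M)$ be positive. The following are equivalent: (i) $\|\Phi^*\mu\|=\|\mu\|$. (ii) For every $\gamma\in(0,1)$ there exist $B\subseteq\widetilde M$ and $f\in B_{\mathrm{Lip}_0(M)}$ with $\mu(B)\ge\gamma\mu(\widetilde M)$ and $f(m_{x,y})=1$ for all $(x,y)\in B$. (iii) For every $\gamma\in(0,1)$ there exists a cyclically monotonic $B\subseteq\widetilde M$ with $\mu(B)\ge\gamma\mu(\widetilde M)$.
   Context: $M$ has base point $0$; $\mathrm{Lip}_0(M)$ is the real Banach space of Lipschitz $f\colon M\to\mathbb R$ with $f(0)=0$, normed by the best Lipschitz constant, with unit ball $B_{\mathrm{Lip}_0(M)}$. $\widetilde M=\{(x,y)\in M\times M:x\ne y\}$ and $f(m_{x,y})=(f(x)-f(y))/d(x,y)$. $ba(\widetilde M)$ is the Banach space of bounded finitely additive signed measures on the power set of $\widetilde M$ with norm $|\mu|(\widetilde M)$. $\Phi f(x,y)=(f(x)-f(y))/d(x,y)$ (de Leeuw map into $\ell_\infty(\widetilde M)$) and $(\Phi^*\mu)(f)=\int_{\widetilde M}\Phi f\,d\mu$. $B\subseteq\widetilde M$ is cyclically monotonic if for every finite sequence $(x_1,y_1),\dots,(x_k,y_k)\in B$, with $y_{k+1}=y_1$, $\sum_{i=1}^k d(x_i,y_{i+1})\ge\sum_{i=1}^k d(x_i,y_i)$. *)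

(* Defs.v *)
From HB Require Import structures.
From mathcomp Require Import all_boot all_order all_algebra.
From mathcomp Require Import boolp classical_sets reals.
Set Implicit Arguments. Unset Strict Implicit. Unset Printing Implicit Defensive.
Import Order.TTheory GRing.Theory Num.Theory.
Local Open Scope classical_set_scope.
Local Open Scope ring_scope.

Section Defs.
Variable R : realType.

Definition is_metric (T : Type) (d : T -> T -> R) : Prop :=
  (forall x y, d x y = 0 <-> x = y) /\
  (forall x y, d x y = d y x) /\
  (forall x y z, d x z <= d x y + d y z).

Definition int_valued_le (T : Type) (d : T -> T -> R) (n : nat) : Prop :=
  forall x y, exists k : nat, (k <= n)%N /\ d x y = k%:R.

Definition in_Lip0_ball (T : Type) (d : T -> T -> R) (x0 : T) (f : T -> R) : Prop :=
  f x0 = 0 /\ forall x y, `|f x - f y| <= d x y.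

Definition Mt (T : Type) := {p : T * T | p.1 <> p.2}.

Definition Phi (T : Type) (d : T -> T -> R) (f : T -> R) (p : Mt T) : R :=
  (f (sval p).1 - f (sval p).2) / d (sval p).1 (sval p).2.

Definition fin_partition (U : Type) (s : seq (set U)) : Prop :=
  (forall i j, (i < j)%N -> (j < size s)%N -> nth set0 s i `&` nth set0 s j = set0) /\
  (forall x, exists2 i, (i < size s)%N & nth set0 s i x).

Definition is_ba (U : Type) (mu : set U -> R) : Prop :=
  (forall A B, A `&` B = set0 -> mu (A `|` B) = mu A + mu B) /\
  (exists C, forall A, `|mu A| <= C).

Definition ba_positive (U : Type) (mu : set U -> R) : Prop := forall A, 0 <= mu A.

Definition ba_norm (U : Type) (mu : set U -> R) : R :=
  sup [set r | exists s, fin_partition s /\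
                 r = \sum_(i < size s) `|mu (nth set0 s i)|].

(* integral of a bounded function against a positive finitely additive measure
   on the power set (supremum of lower sums over finite partitions) *)
Definition ba_integral (U : Type) (mu : set U -> R) (g : U -> R) : R :=
  sup [set r | exists s, fin_partition s /\
                 r = \sum_(i < size s) inf (g @` (nth set0 s i)) * mu (nth set0 s i)].

Definition Phi_star_norm (T : Type) (d : T -> T -> R) (x0 : T)
  (mu : set (Mt T) -> R) : R :=
  sup [set r | exists f, in_Lip0_ball d x0 f /\ r = `|ba_integral mu (Phi d f)|].

Definition cyclically_monotonic (T : Type) (d : T -> T -> R) (B : set (Mt T)) : Prop :=
  forall (k : nat) (p : 'I_k -> Mt T), (forall i, B (p i)) ->
    \sum_(i < k) d (sval (p i)).1 (sval (p (ordS i))).2 >=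
    \sum_(i < k) d (sval (p i)).1 (sval (p i)).2.

End Defs.

(* Main.v *)
Require Import Defs.
From HB Require Import structures.
From mathcomp Require Import all_boot all_order all_algebra.
From mathcomp Require Import boolp classical_sets reals.
From mathcomp Require Import lra ring zify.
Import Order.TTheory GRing.Theory Num.Theory.
Local Open Scope classical_set_scope.
Local Open Scope ring_scope.
Set Implicit Arguments. Unset Strict Implicit. Unset Printing Implicit Defensive.

Section BA.
Variables (R : realType) (U : Type) (mu : set U -> R).
Hypotheses (mu_ba : is_ba mu) (mu_pos : ba_positive mu).

Lemma muU A B : A `&` B = set0 -> mu (A `|` B) = mu A + mu B.
Proof. by case: mu_ba => H _; apply: H. Qed.

Lemma mu0 : mu set0 = 0.
Proof.
have := muU (A:=set0) (B:=set0); rewrite setI0 setU0 => /(_ erefl) H.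
lra.
Qed.

Lemma muC A : mu (~` A) = mu setT - mu A.
Proof. rewrite -(setUv A) muU ?setICr //; lra. Qed.

Lemma mu_le A B : A `<=` B -> mu A <= mu B.
Proof.
move=> AB; rewrite -(setDUK AB) muU; first by rewrite lerDl mu_pos.
by rewrite setDE setICA setICr setI0.
Qed.

Lemma mu_disj (F : nat -> set U) k :
  (forall i j, (i < j)%N -> (j < k)%N -> F i `&` F j = set0) ->
  \sum_(i < k) mu (F i) = mu [set x | exists2 i, (i < k)%N & F i x].
Proof.
elim: k => [|k IH] H.
  rewrite big_ord0 -mu0; congr mu; apply/seteqP; split => x //=.
  by case.
rewrite big_ord_recr /= IH; last by move=> i j ij jk; apply: H => //; apply: ltnW.
rewrite -muU.
  congr mu; apply/seteqP; split => x /=.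
    case=> [[i ik Fi]|Fk]; first by exists i => //; apply: ltnW.
    by exists k.
  case=> i; rewrite ltnS leq_eqVlt => /orP[/eqP->|ik] Fi; first by right.
  by left; exists i.
apply/seteqP; split => x //= [[i ik Fi] Fk].
suff : (F i `&` F k) x by rewrite (H i k ik (ltnSn k)).
by split.
Qed.

Lemma mu_part (s : seq (set U)) E : fin_partition s ->
  \sum_(i < size s) mu (nth set0 s i `&` E) = mu E.
Proof.
case=> Hd Hc; rewrite (mu_disj (F := fun i => nth set0 s i `&` E)).
  congr mu; apply/seteqP; split => x /=; first by case=> i _ [].
  by move=> Ex; case: (Hc x) => i ik Fi; exists i.
move=> i j ij js; apply/seteqP; split => x //= [[Fi _] [Fj _]].
suff : (nth set0 s i `&` nth set0 s j) x by rewrite (Hd i j ij js).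
by split.
Qed.

Lemma mu_partT (s : seq (set U)) : fin_partition s ->
  \sum_(i < size s) mu (nth set0 s i) = mu setT.
Proof.
move=> H; rewrite -(mu_part setT H); apply: eq_bigr => i _; by rewrite setIT.
Qed.

Lemma ba_normE : ba_norm mu = mu setT.
Proof.
rewrite /ba_norm.
have -> : [set r | exists s, fin_partition s /\
                 r = \sum_(i < size s) `|mu (nth set0 s i)|] = [set mu setT].
  apply/seteqP; split => r /=.
    case=> s [Hs ->]; rewrite -(mu_partT Hs); apply: eq_bigr => i _.
    by rewrite ger0_norm.
  move=> ->; exists [:: setT]; split.
    split; first by move=> [|i] [|j].
    by move=> x; exists 0%N.
  by rewrite big_ord_recl big_ord0 addr0 /= ger0_norm.
by rewrite sup1.
Qed.


Section Integral.
Variable g : U -> R.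
Hypothesis hg : forall p, -1 <= g p <= 1.

Definition LS (s : seq (set U)) :=
  \sum_(i < size s) inf (g @` nth set0 s i) * mu (nth set0 s i).

Lemma hlb (A : set U) : has_lbound (g @` A).
Proof. by exists (-1) => _ [p _ <-]; case/andP: (hg p). Qed.

Lemma inf_img_le (A : set U) p : A p -> inf (g @` A) <= g p.
Proof. by move=> Ap; apply: (ge_inf (hlb A)); exists p. Qed.

Lemma inf_img_ge (A : set U) c : A !=set0 -> (forall p, A p -> c <= g p) ->
  c <= inf (g @` A).
Proof.
move=> [p Ap] H; apply: lb_le_inf; first by exists (g p), p.
by move=> _ [q Aq <-]; apply: H.
Qed.

Lemma LS_le s eta : fin_partition s -> 0 <= eta ->
  LS s <= mu setT - eta * mu [set p | g p < 1 - eta].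
Proof.
move=> Hs He; rewrite -(mu_partT Hs) -(mu_part [set p | g p < 1 - eta] Hs).
rewrite mulr_sumr -sumrB /LS; apply: ler_sum => i _.
set P := nth set0 s i; set L := [set p | g p < 1 - eta].
have mP := mu_pos P.
case: (pselect (exists p, (P `&` L) p)) => [[p [Pp Lp]]|nPL].
  have h1 : inf (g @` P) <= 1 - eta by apply: le_trans (inf_img_le Pp) (ltW Lp).
  have h2 : mu (P `&` L) <= mu P by apply: mu_le => x [].
  have := ler_wpM2r mP h1; nra.
have -> : P `&` L = set0.
  by apply/seteqP; split => x //= PLx; apply: nPL; exists x.
rewrite mu0 mulr0 subr0.
case: (pselect (exists p, P p)) => [[p Pp]|nP].
  have h1 : inf (g @` P) <= 1.
    by apply: le_trans (inf_img_le Pp) _; case/andP: (hg p).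
  by have := ler_wpM2r mP h1; rewrite mul1r.
have -> : P = set0 by apply/seteqP; split => x //= Px; apply: nP; exists x.
by rewrite mu0 mulr0.
Qed.

Definition LSset := [set r | exists s, fin_partition s /\ r = LS s].

Lemma LSset_ne : LSset !=set0.
Proof.
exists (LS [:: setT]), [:: setT]; split => //; split; first by move=> [|i] [|j].
by move=> x; exists 0%N.
Qed.

Lemma LSset_ub : ubound LSset (mu setT).
Proof.
move=> _ [s [Hs ->]]; have := LS_le Hs (lexx 0); by rewrite mul0r subr0.
Qed.

Lemma LSset_sup : has_sup LSset.
Proof. by split; [exact: LSset_ne | exists (mu setT); exact: LSset_ub]. Qed.

Lemma ba_intE : ba_integral mu g = sup LSset.
Proof. by []. Qed.

Lemma ba_int_ub : ba_integral mu g <= mu setT.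
Proof. exact: ge_sup LSset_ne LSset_ub. Qed.

Lemma ba_int_ge2 (A : set U) a b : (forall p, A p -> a <= g p) ->
  (forall p, ~ A p -> b <= g p) ->
  a * mu A + b * mu (~` A) <= ba_integral mu g.
Proof.
move=> Ha Hb.
have Hs : fin_partition [:: A; ~` A].
  split; first by move=> [|[|i]] [|[|j]] //= _ _; rewrite setICr.
  by move=> x; case: (pselect (A x)) => Ax; [exists 0%N | exists 1%N].
apply: le_trans (sup_upper_bound LSset_sup (x := LS [:: A; ~` A]) _); last first.
  by exists [:: A; ~` A].
rewrite /LS /= big_ord_recl big_ord_recl big_ord0 addr0 /=.
have key : forall (B : set U) c, (forall p, B p -> c <= g p) ->
    c * mu B <= inf (g @` B) * mu B.
  move=> B c H; case: (pselect (exists p, B p)) => [Bn|nB].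
    by apply: ler_wpM2r; [exact: mu_pos | exact: inf_img_ge].
  have -> : B = set0 by apply/seteqP; split => x //= Bx; apply: nB; exists x.
  by rewrite mu0 !mulr0.
apply: lerD; first exact: key.
by apply: key => p; apply: Hb.
Qed.

Lemma ba_int_lb : - mu setT <= ba_integral mu g.
Proof.
have := @ba_int_ge2 setT (-1) (-1).
rewrite (_ : ~` setT = set0); last by apply/seteqP; split => x //=.
rewrite mu0 mulr0 addr0 mulN1r; apply => p _; by case/andP: (hg p).
Qed.

End Integral.
End BA.

Section Metric.
Variables (R : realType) (n : nat) (T : Type) (d : T -> T -> R) (x0 : T).
Hypotheses (hm : is_metric d) (hi : int_valued_le d n).

Lemma d_sym x y : d x y = d y x.
Proof. by case: hm => _ [H _]; apply: H. Qed.

Lemma d_tri x y z : d x z <= d x y + d y z.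
Proof. by case: hm => _ [_ H]; apply: H. Qed.

Lemma d_xx x : d x x = 0.
Proof. by case: hm => H _; apply/H. Qed.

Lemma d_ge0 x y : 0 <= d x y.
Proof. have := d_tri x y x; rewrite d_xx d_sym; lra. Qed.

Lemma d_gt0 (p : Mt T) : 0 < d (sval p).1 (sval p).2.
Proof.
rewrite lt_def d_ge0 andbT; apply/eqP => H.
by case: hm => /(_ (sval p).1 (sval p).2) [/(_ H) E _] _; apply: (svalP p).
Qed.

Lemma Phi_one f (p : Mt T) :
  (Phi d f p = 1) <-> (f (sval p).1 - f (sval p).2 = d (sval p).1 (sval p).2).
Proof.
have hp := d_gt0 p; rewrite /Phi; split.
  by move=> H; rewrite -[LHS](divfK (lt0r_neq0 hp)) H mul1r.
by move=> ->; rewrite divrr // unitfE gt_eqF.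
Qed.

Lemma Phi_bound f : in_Lip0_ball d x0 f -> forall p, -1 <= Phi d f p <= 1.
Proof.
move=> [_ Hf] p; have hp := d_gt0 p; have := Hf (sval p).1 (sval p).2.
rewrite ler_norml /Phi ler_pdivlMr // ler_pdivrMr // mulN1r mul1r.
by [].
Qed.

Lemma ball_opp f : in_Lip0_ball d x0 f -> in_Lip0_ball d x0 (fun x => - f x).
Proof. by move=> [H0 Hf]; split; [rewrite H0 oppr0 | move=> x y; rewrite -opprD normrN]. Qed.

Lemma Phi_opp f p : Phi d (fun x => - f x) p = - Phi d f p.
Proof. by rewrite /Phi -mulNr opprD. Qed.

Lemma ball0 : in_Lip0_ball d x0 (fun _ => 0).
Proof. by split => // x y; rewrite subrr normr0 d_ge0. Qed.

Lemma cm_of_f f B : in_Lip0_ball d x0 f -> (forall p, B p -> Phi d f p = 1) ->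
  cyclically_monotonic d B.
Proof.
move=> [_ Hf] HB k p Bp.
have E i : d (sval (p i)).1 (sval (p i)).2 = f (sval (p i)).1 - f (sval (p i)).2.
  by apply/esym/Phi_one/HB.
rewrite (eq_bigr _ (fun i _ => E i)) sumrB.
rewrite [X in _ - X <= _](reindex_inj (@ordS_inj k)) -sumrB.
apply: ler_sum => i _; apply: le_trans (Hf _ _); exact: ler_norm.
Qed.


Section Potential.
Variable B : set (Mt T).
Hypothesis hB : cyclically_monotonic d B.

Local Notation X q := (sval q).1.
Local Notation Y q := (sval q).2.

Definition cost z k (p : nat -> Mt T) :=
  match k with
  | 0 => d z x0
  | k'.+1 => d z (Y (p 0%N)) + \sum_(i < k') d (X (p i)) (Y (p i.+1))
            - \sum_(i < k'.+1) d (X (p i)) (Y (p i)) + d (X (p k')) x0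
  end.

Definition consf (q : Mt T) (p : nat -> Mt T) : nat -> Mt T :=
  fun i => if i is j.+1 then p j else q.

Lemma cost_tri u v k p : cost u k p <= d u v + cost v k p.
Proof.
case: k => [|k] /=; first exact: d_tri.
have := d_tri u v (Y (p 0%N)); lra.
Qed.

Lemma cost_cons q k p :
  cost (Y q) k.+1 (consf q p) = - d (X q) (Y q) + cost (X q) k p.
Proof.
case: k => [|k] /=.
  by rewrite big_ord0 big_ord1 /= d_xx; lra.
rewrite big_ord_recl /= d_xx.
rewrite [\sum_(i < k.+2) _]big_ord_recl /=.
have E1 : \sum_(i < k) d (X (consf q p (lift ord0 i))) (Y (consf q p (lift ord0 i).+1))
   = \sum_(i < k) d (X (p i)) (Y (p i.+1)) by [].
have E2 : \sum_(i < k.+1) d (X (consf q p (lift ord0 i))) (Y (consf q p (lift ord0 i)))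
   = \sum_(i < k.+1) d (X (p i)) (Y (p i)) by [].
rewrite E1 E2; lra.
Qed.

Lemma cost_cycle k p : (forall i, (i < k)%N -> B (p i)) -> 0 <= cost x0 k p.
Proof.
case: k => [|k] Hp /=; first by rewrite d_xx.
have := hB (p := fun i : 'I_k.+1 => p i) (fun i => Hp i (ltn_ord i)).
rewrite big_ord_recr [Z in _ <= Z -> _]big_ord_recr /=.
have -> : \sum_(i < k) d (X (p i)) (Y (p (i.+1 %% k.+1)%N))
        = \sum_(i < k) d (X (p i)) (Y (p i.+1)).
  apply: eq_bigr => i _ /=; rewrite modn_small //.
  by rewrite ltnS ltn_ord.
rewrite modnn.
have := d_tri (X (p k)) x0 (Y (p 0%N)); rewrite (d_sym x0 (Y (p 0%N))).
lra.
Qed.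

Definition Sc z := [set r | r = d z x0 \/
  exists k p, (forall i, (i < k.+1)%N -> B (p i)) /\ r = cost z k.+1 p].

Definition pot z := inf (Sc z).

Lemma Sc_ne z : Sc z !=set0.
Proof. by exists (d z x0); left. Qed.

Lemma Sc_lb z : lbound (Sc z) (- d x0 z).
Proof.
move=> r [->|[k [p [Hp ->]]]].
  by have := d_ge0 z x0; have := d_ge0 x0 z; lra.
have := cost_cycle Hp; have := cost_tri x0 z k.+1 p; lra.
Qed.

Lemma pot_le z r : Sc z r -> pot z <= r.
Proof. by move=> Hr; apply: (ge_inf _ Hr); exists (- d x0 z); apply: Sc_lb. Qed.

Lemma pot_ge z c : (forall r, Sc z r -> c <= r) -> c <= pot z.
Proof. by move=> H; apply: lb_le_inf (Sc_ne z) _ => r; apply: H. Qed.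

Lemma pot_lip u v : pot u <= d u v + pot v.
Proof.
rewrite -lerBlDl; apply: pot_ge => r [->|[k [p [Hp ->]]]].
  have := pot_le (r := d u x0) (or_introl erefl); have := d_tri u v x0; lra.
have := pot_le (r := cost u k.+1 p) (or_intror (ex_intro _ k (ex_intro _ p (conj Hp erefl)))).
have := cost_tri u v k.+1 p; lra.
Qed.

Lemma pot_ball : in_Lip0_ball d x0 pot.
Proof.
split.
  apply/eqP; rewrite eq_le; apply/andP; split.
    by apply: pot_le; left; rewrite d_xx.
  apply: pot_ge => r [->|[k [p [Hp ->]]]]; first by rewrite d_xx.
  exact: cost_cycle Hp.
move=> x y; rewrite ler_norml; have := pot_lip x y; have := pot_lip y x.
rewrite (d_sym y x); lra.
Qed.

Lemma pot_B q : B q -> Phi d pot q = 1.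
Proof.
move=> Bq; apply/Phi_one; apply/eqP; rewrite eq_le; apply/andP; split.
  have := pot_lip (X q) (Y q); lra.
suff : pot (Y q) + d (X q) (Y q) <= pot (X q) by lra.
apply: pot_ge => r [->|[k [p [Hp ->]]]].
  have := pot_le (z := Y q) (r := cost (Y q) 1 (consf q (fun _ => q))).
  rewrite (cost_cons q 0 (fun _ => q)) /= => H.
  suff : pot (Y q) <= - d (X q) (Y q) + d (X q) x0 by lra.
  apply: H; right; exists 0%N, (consf q (fun _ => q)); split => //.
  by move=> [|i].
  by rewrite cost_cons.
have := pot_le (z := Y q) (r := cost (Y q) k.+2 (consf q p)).
rewrite cost_cons => H.
suff : pot (Y q) <= - d (X q) (Y q) + cost (X q) k.+1 p by lra.
apply: H; right; exists k.+1, (consf q p); split => //.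
by move=> [|i] //= /Hp.
by rewrite cost_cons.
Qed.

End Potential.

End Metric.

Lemma floor_diff (R : realType) (a b : R) (k : nat) : a - b <= k%:R ->
  ((Num.floor a)%:~R - (Num.floor b)%:~R : R) <= k%:R.
Proof.
move=> H; have h1 := Num.Theory.floor_le a; have h2 := Num.Theory.floorD1_gt b.
rewrite intrD in h2.
have : ((Num.floor a - Num.floor b)%:~R : R) < (k%:Z + 1)%:~R.
  rewrite !intrD !intrN /=; lra.
rewrite ltr_int => h3.
have h4 : (Num.floor a - Num.floor b <= k%:Z)%R by lia.
by move: h4; rewrite -(ler_int R) intrB.
Qed.

Lemma int_frac_uniq (R : realType) (c : R) (N j j' : nat) :
  (j < N)%N -> (j' < N)%N ->
  c + j%:R / N%:R - (Num.floor (c + j%:R / N%:R))%:~R < N%:R^-1 ->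
  c + j'%:R / N%:R - (Num.floor (c + j'%:R / N%:R))%:~R < N%:R^-1 -> j = j'.
Proof.
wlog: j j' / (j <= j')%N.
  move=> W jN j'N H1 H2; case: (leqP j j') => jj; first exact: W.
  by apply/esym/W => //; apply: ltnW.
move=> jj jN j'N H1 H2; apply/eqP; rewrite eqn_leq jj /=; rewrite leqNgt; apply/negP => jlt.
have N0 : (0 < N)%N by apply: leq_ltn_trans jN.
have e0 : 0 < (N%:R : R)^-1 by rewrite invr_gt0 ltr0n.
have hj : (j%:R + 1 : R) <= j'%:R by rewrite natr1 ler_nat.
have hj2 : (j'%:R + 1 : R) <= N%:R by rewrite natr1 ler_nat.
have hj0 : (0 : R) <= j%:R by apply: ler0n.
have Ne : (N%:R : R) * (N%:R : R)^-1 = 1 by rewrite mulfV // pnatr_eq0 -lt0n.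
have hA : j'%:R * (N%:R : R)^-1 - j%:R * (N%:R : R)^-1 >= (N%:R : R)^-1 by nra.
have hB : j'%:R * (N%:R : R)^-1 - j%:R * (N%:R : R)^-1 + (N%:R : R)^-1 <= 1 by nra.
have l1 := Num.Theory.floor_le (c + j%:R / N%:R).
have l2 := Num.Theory.floor_le (c + j'%:R / N%:R).
set m := Num.floor (c + j%:R / N%:R) in H1 l1.
set m' := Num.floor (c + j'%:R / N%:R) in H2 l2.
have g1 : (0 : R) < (m' - m)%:~R by rewrite intrB; lra.
have g2 : ((m' - m)%:~R : R) < 1 by rewrite intrB; lra.
rewrite ltr0z in g1; rewrite ltrz1 in g2; lia.
Qed.

Section Round.
Variables (R : realType) (n : nat) (T : Type) (d : T -> T -> R) (x0 : T).
Variable mu : set (Mt T) -> R.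
Hypotheses (hm : is_metric d) (hi : int_valued_le d n).
Hypotheses (mu_ba : is_ba mu) (mu_pos : ba_positive mu).

Local Notation X q := (sval q).1.
Local Notation Y q := (sval q).2.

Lemma round h (N : nat) (G : set (Mt T)) : in_Lip0_ball d x0 h -> (0 < N)%N ->
  (forall p, G p -> d (X p) (Y p) - (h (X p) - h (Y p)) < N%:R^-1) ->
  exists g B, [/\ in_Lip0_ball d x0 g, mu G - mu setT / N%:R <= mu B &
                 forall p, B p -> Phi d g p = 1].
Proof.
move=> [h0 hL] N0 HG.
pose gt (t : R) x := ((Num.floor (h x + t))%:~R - (Num.floor (h x0 + t))%:~R : R).
have canc : forall A B C : R, (A - C) - (B - C) = A - B by move=> *; lra.
have gball t : in_Lip0_ball d x0 (gt t).
  split; first by rewrite /gt subrr.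
  move=> x y; rewrite /gt canc; have := hL x y; rewrite ler_norml => /andP[l1 l2].
  case: (hi x y) => k [_ dk]; rewrite dk in l1 l2 *; rewrite ler_norml.
  apply/andP; split.
    rewrite lerNl opprB; apply: floor_diff; lra.
  apply: floor_diff; lra.
have gok t p : d (X p) (Y p) - (h (X p) - h (Y p)) <=
    h (Y p) + t - (Num.floor (h (Y p) + t))%:~R -> Phi d (gt t) p = 1.
  move=> Hs; apply/(Phi_one hm); rewrite /gt canc.
  have := hL (X p) (Y p); rewrite ler_norml => /andP[l1 l2].
  case: (hi (X p) (Y p)) => k [_ dk]; rewrite dk in l1 l2 Hs *.
  apply/eqP; rewrite eq_le; apply/andP; split; first by apply: floor_diff; lra.
  have : (Num.floor (h (Y p) + t) + k%:Z <= Num.floor (h (X p) + t))%R.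
    by rewrite Num.Theory.floor_ge_int intrD /=; lra.
  rewrite -(ler_int R) intrD /=; lra.
pose F (j : nat) := [set p | G p /\ Phi d (gt (j%:R / N%:R)) p <> 1].
have Fdisj : forall i j, (i < j)%N -> (j < N)%N -> F i `&` F j = set0.
  move=> i j ij jN; apply/seteqP; split => p //= [[Gp Fi] [_ Fj]].
  have Hs := HG p Gp.
  have fr : forall k, Phi d (gt (k%:R / N%:R)) p <> 1 ->
     h (Y p) + k%:R / N%:R - (Num.floor (h (Y p) + k%:R / N%:R))%:~R < N%:R^-1.
    move=> k Fk; have [hle|hlt] := leP (d (X p) (Y p) - (h (X p) - h (Y p)))
      (h (Y p) + k%:R / N%:R - (Num.floor (h (Y p) + k%:R / N%:R))%:~R).
      by case: Fk; apply: gok.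
    exact: lt_trans hlt Hs.
  have := int_frac_uniq (ltn_trans ij jN) jN (fr i Fi) (fr j Fj).
  by move=> E; rewrite E ltnn in ij.
have Hsum := mu_disj mu_ba Fdisj.
have Hle : \sum_(i < N) mu (F i) <= mu setT by rewrite Hsum; apply: mu_le.
have [j [jN Fj]] : exists j, (j < N)%N /\ mu (F j) <= mu setT / N%:R.
  apply: contrapT => Hn.
  have : \sum_(0 <= i < N) (mu setT / N%:R) < \sum_(0 <= i < N) mu (F i).
    apply: ltr_sum_nat => // i /andP[_ iN].
    rewrite ltNge; apply/negP => Hi; apply: Hn; by exists i.
  rewrite sumr_const_nat subn0 -(mulr_natr (mu setT / N%:R)) divfK ?pnatr_eq0 -?lt0n //.
  rewrite big_mkord; lra.
pose t := j%:R / N%:R : R.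
exists (gt t), [set p | G p /\ Phi d (gt t) p = 1]; split => //; last by move=> p [].
have EG : G = [set p | G p /\ Phi d (gt t) p = 1] `|` F j.
  apply/seteqP; split => p /=; last by case=> -[].
  move=> Gp; case: (pselect (Phi d (gt t) p = 1)) => H; [left | right]; by [].
rewrite {1}EG muU //; first lra.
by apply/seteqP; split => p //= [[_ H1] [_ H2]].
Qed.

End Round.

Section Main.
Variables (R : realType) (n : nat) (T : Type) (d : T -> T -> R) (x0 : T).
Variable mu : set (Mt T) -> R.
Hypotheses (hm : is_metric d) (hi : int_valued_le d n).
Hypotheses (mu_ba : is_ba mu) (mu_pos : ba_positive mu).

Local Notation X q := (sval q).1.
Local Notation Y q := (sval q).2.

Definition PS := [set r | exists f, in_Lip0_ball d x0 f /\ r = `|ba_integral mu (Phi d f)|].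

Lemma int_abs f : in_Lip0_ball d x0 f -> `|ba_integral mu (Phi d f)| <= mu setT.
Proof.
move=> Hf; have hg := Phi_bound hm Hf.
rewrite ler_norml; apply/andP; split.
  by have H := ba_int_lb mu_ba mu_pos hg; exact H.
by have H := ba_int_ub mu_ba mu_pos hg; exact H.
Qed.

Lemma PS_sup : has_sup PS.
Proof.
split; first by exists `|ba_integral mu (Phi d (fun _ => 0))|, (fun _ => 0); split => //; exact: ball0.
by exists (mu setT) => _ [f [Hf ->]]; apply: int_abs.
Qed.

Lemma PS_ub f : in_Lip0_ball d x0 f -> `|ba_integral mu (Phi d f)| <= Phi_star_norm d x0 mu.
Proof. by move=> Hf; apply: (sup_upper_bound PS_sup); exists f. Qed.

Lemma PSN_le : Phi_star_norm d x0 mu <= mu setT.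
Proof.
apply: ge_sup; first by case: PS_sup.
by move=> _ [f [Hf ->]]; apply: int_abs.
Qed.

Lemma PSN_ge0 : 0 <= Phi_star_norm d x0 mu.
Proof. have H := PS_ub (ball0 x0 hm). exact: le_trans (normr_ge0 _) H. Qed.

Lemma stepA f eta eps : in_Lip0_ball d x0 f -> 0 < eta ->
  (1 - eps) * mu setT < `|ba_integral mu (Phi d f)| ->
  exists h G, [/\ in_Lip0_ball d x0 h, (forall p, G p -> 1 - eta <= Phi d h p) &
    eta * mu (~` G) < eps * mu setT].
Proof.
move=> Hf e0 HI; have hg := Phi_bound hm Hf.
have [I0|I0] := leP 0 (ba_integral mu (Phi d f)).
  rewrite ger0_norm // in HI.
  have HI' : 0 < ba_integral mu (Phi d f) - (1 - eps) * mu setT by rewrite subr_gt0.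
  have [L LS HL] := sup_adherent HI' (LSset_sup mu_ba mu_pos hg).
  rewrite opprB addrCA subrr addr0 in HL.
  case: LS => s [Hs EL].
  have := LS_le mu_ba mu_pos hg Hs (ltW e0); rewrite -EL => HL2.
  exists f, [set p | 1 - eta <= Phi d f p]; split => // .
  have -> : ~` [set p | 1 - eta <= Phi d f p] = [set p | Phi d f p < 1 - eta].
    by apply/seteqP; split => p /=; rewrite ltNge => H; apply/negP.
  lra.
rewrite ltr0_norm // in HI.
pose A := [set p | Phi d f p <= -1 + eta].
have := ba_int_ge2 mu_ba mu_pos hg (A := A) (a := -1) (b := -1 + eta).
rewrite (muC mu_ba A) => H.
have /H {}H : forall p, A p -> -1 <= Phi d f p by move=> p _; case/andP: (hg p).
have /H {}H : forall p, ~ A p -> -1 + eta <= Phi d f p.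
  by move=> p; rewrite /A /= => /negP; rewrite -ltNge => /ltW.
exists (fun x => - f x), A; split.
- exact: ball_opp.
- by move=> p Ap; rewrite Phi_opp /A /=; move: Ap; rewrite /A /=; lra.
- rewrite (muC mu_ba A); lra.
Qed.


Lemma i_ii : Phi_star_norm d x0 mu = mu setT -> forall gamma : R, 0 < gamma < 1 ->
  exists B : set (Mt T), exists f : T -> R,
    [/\ in_Lip0_ball d x0 f, gamma * mu setT <= mu B &
        forall p, B p -> Phi d f p = 1].
Proof.
move=> HP gamma /andP[g0 g1].
have mT0 : 0 <= mu setT := mu_pos _.
have [mTz|mTp] := leP (mu setT) 0.
  exists set0, (fun _ => 0); split => //; first exact: ball0.
  rewrite (mu0 mu_ba); nra.
pose N := (Num.truncn (2 / (1 - gamma))).+1.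
have N0 : (0 < N)%N by [].
have hN : 2 / (1 - gamma) < N%:R by apply: Num.Theory.truncnS_gt.
have g10 : 0 < 1 - gamma by lra.
have hN2 : N%:R^-1 < (1 - gamma) / 2.
  rewrite -[(1 - gamma) / 2]invf_div ltf_pV2 // posrE ?ltr0n //.
  by apply: divr_gt0.
pose eta := ((n.+1 * N)%:R : R)^-1.
have e0 : 0 < eta by rewrite invr_gt0 ltr0n muln_gt0.
have he : n%:R * eta < N%:R^-1.
  rewrite /eta natrM invfM mulrA -[Z in _ < Z]mul1r ltr_pM2r ?invr_gt0 ?ltr0n //.
  by rewrite ltr_pdivrMr ?ltr0n // mul1r ltr_nat.
pose eps := eta * ((1 - gamma) / 2).
have eps0 : 0 < eps by apply: mulr_gt0 => //; apply: divr_gt0.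
have epsm : 0 < eps * mu setT by apply: mulr_gt0.
have [r [f [Hf Er]] Hr] := sup_adherent epsm (PS_sup).
rewrite -/(Phi_star_norm d x0 mu) HP Er in Hr.
have HI : (1 - eps) * mu setT < `|ba_integral mu (Phi d f)| by lra.
have [h [G [Hh HG HGm]]] := stepA Hf e0 HI.
have Hc : forall p, G p -> d (X p) (Y p) - (h (X p) - h (Y p)) < N%:R^-1.
  move=> p Gp; have hp := d_gt0 hm p; have := HG p Gp.
  rewrite /Phi => H1.
  have E : h (X p) - h (Y p) = (h (X p) - h (Y p)) / d (X p) (Y p) * d (X p) (Y p).
    by rewrite divfK // lt0r_neq0.
  rewrite E.
  case: (hi (X p) (Y p)) => k [kn dk].
  have dn : d (X p) (Y p) <= n%:R by rewrite dk ler_nat.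
  set Ph := (h (X p) - h (Y p)) / d (X p) (Y p) in H1 *.
  have : d (X p) (Y p) * (1 - Ph) <= d (X p) (Y p) * eta.
    by apply: ler_wpM2l; [exact: ltW | lra].
  have : d (X p) (Y p) * eta <= n%:R * eta by apply: ler_wpM2r => //; exact: ltW.
  lra.
have [g [B [Hg HB HBp]]] := round hm hi mu_ba mu_pos Hh N0 Hc.
exists B, g; split => //.
have h1 : mu (~` G) < (1 - gamma) / 2 * mu setT.
  by rewrite -(ltr_pM2l e0) mulrA.
have h2 : mu setT / N%:R < (1 - gamma) / 2 * mu setT.
  by rewrite mulrC ltr_pM2r.
rewrite (muC mu_ba G) in h1; lra.
Qed.

Lemma iii_i : (forall gamma : R, 0 < gamma < 1 ->
    exists2 B : set (Mt T), cyclically_monotonic d B & gamma * mu setT <= mu B) ->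
  Phi_star_norm d x0 mu = ba_norm mu.
Proof.
move=> H; rewrite (ba_normE mu_ba mu_pos).
have key gamma : 0 < gamma < 1 -> (2 * gamma - 1) * mu setT <= Phi_star_norm d x0 mu.
  move=> /H [B hB HB].
  have Hf := pot_ball x0 hm hB.
  have hg := Phi_bound hm Hf.
  have H1 := ba_int_ge2 mu_ba mu_pos hg (A := B) (a := 1) (b := -1).
  have /H1 {}H1 : forall p, B p -> 1 <= Phi d (pot d x0 B) p.
    by move=> p Bp; rewrite (pot_B x0 hm hB Bp).
  have /H1 {}H1 : forall p, ~ B p -> -1 <= Phi d (pot d x0 B) p.
    by move=> p _; case/andP: (hg p).
  have H2 := PS_ub Hf.
  have H3 := ler_norm (ba_integral mu (Phi d (pot d x0 B))).
  rewrite (muC mu_ba B) in H1; lra.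
apply/eqP; rewrite eq_le PSN_le /= leNgt; apply/negP => Hlt.
have P0 := PSN_ge0.
have mT0 : 0 < mu setT by lra.
pose dl := (mu setT - Phi_star_norm d x0 mu) / (4 * mu setT).
have dl0 : 0 < dl by apply: divr_gt0; lra.
have dl1 : dl < 1 by rewrite ltr_pdivrMr; lra.
have hdl : 4 * (dl * mu setT) = mu setT - Phi_star_norm d x0 mu.
  by rewrite /dl; field; rewrite lt0r_neq0.
have hk : 0 < 1 - dl < 1 by apply/andP; split; lra.
have := key (1 - dl) hk; lra.
Qed.

End Main.

Unset Implicit Arguments.

Theorem proposition2p8 (R : realType) (n : nat) (T : Type) (d : T -> T -> R)
  (x0 : T) (mu : set (Mt T) -> R) :
  is_metric d -> int_valued_le d n ->
  is_ba mu -> ba_positive mu ->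
  [/\ (Phi_star_norm d x0 mu = ba_norm mu ->
        forall gamma : R, 0 < gamma < 1 ->
          exists B : set (Mt T), exists f : T -> R,
            [/\ in_Lip0_ball d x0 f, gamma * mu setT <= mu B &
                forall p, B p -> Phi d f p = 1]),
      ((forall gamma : R, 0 < gamma < 1 ->
          exists B : set (Mt T), exists f : T -> R,
            [/\ in_Lip0_ball d x0 f, gamma * mu setT <= mu B &
                forall p, B p -> Phi d f p = 1]) ->
        forall gamma : R, 0 < gamma < 1 ->
          exists2 B : set (Mt T), cyclically_monotonic d B & gamma * mu setT <= mu B) &
      ((forall gamma : R, 0 < gamma < 1 ->
          exists2 B : set (Mt T), cyclically_monotonic d B & gamma * mu setT <= mu B) ->
        Phi_star_norm d x0 mu = ba_norm mu)].
Proof.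
move=> hm hi mu_ba mu_pos; split.
- by rewrite (ba_normE mu_ba mu_pos); apply: i_ii.
- move=> H gamma hg; have [B [f [Hf HB HBp]]] := H gamma hg.
  exists B => //; exact (cm_of_f hm Hf HBp).
- exact: iii_i.
Qed.
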